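(* Let $n,k$ be integers with $1\le k\le n-2$, let $b_1\ge\dots\ge b_n\ge 0$ be any included bid profile with $b_{k+1}>0$, and let $\alpha\in(0,1)$. The R$^2$-TFRM mechanism described in the context has expected redistribution fraction (expectation over the randomization) $f^*=\alpha\cdot\frac{k}{n}$. Moreover it is allocatively efficient, restricted user incentive compatible in expectation, individually rational for users, and it is individually rational for the miner in expectation whenever $$\alpha\le\frac{n}{k+(n-k)\,b_k/b_{k+1}}.$$
   Context: Setting: transactions in a mempool belong to distinct users $i$ with valuation $\theta_i\ge0$ and bid $b_i\ge0$. The block includes the $n$ highest bids, ordered $b_1\ge\dots\ge b_n$, and confirms the top $k$ ($k\le n-2$). Let $r_i=\frac{k}{n}b_{k+1}$ for $i\le k$ and $r_j=\frac{k}{n}b_k$ for $j\in\{k+1,\dots,n\}$ (the R-TFRM rebate, i.e. $k/n$ times the $k$-th highest bid among the other included users). In R$^2$-TFRM, using trusted randomness not controlled by the miner, independently for each included user a rebate is granted with probability $\alpha$: a confirmed user $i$ pays $b_{k+1}-r_i$ with probability $\alpha$ and $b_{k+1}$ with probability $1-\alpha$; an included unconfirmed user $j$ pays $-r_j$ with probability $\alpha$ and $0$ with probability $1-\alpha$. The miner receives the sum of payments. User utility: $u_i=\mathbb{1}[i\text{ confirmed}]\,\theta_i-p_i$. Allocative efficiency: the confirmed transactions maximize total valuation. Restricted UIC in expectation: for every included user, bidding $\theta_i$ maximizes its expected utility whatever the other included users bid. IR for users: every included user's utility is nonnegative under truthful bidding. IR for the miner in expectation: the total payment $k\,b_{k+1}$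 is at least the expected total rebate. The redistribution fraction is the fraction of the VCG payment $k\,b_{k+1}$ returned to the $k$ confirmed users in the worst case. *)

(* Defs.v *)
From HB Require Import structures.
From mathcomp Require Import all_boot all_order all_algebra.
Set Implicit Arguments. Unset Strict Implicit. Unset Printing Implicit Defensive.
Import Order.TTheory GRing.Theory Num.Theory.
Local Open Scope ring_scope.

Section R2TFRM.
Variable R : realFieldType.
Variables n k : nat.
Implicit Types (b theta : 'I_n -> R) (alpha : R).

(* ostat b m = b_m, the m-th highest bid (1-indexed), i.e. b_1 >= ... >= b_n. *)
Definition ostat b (m : nat) : R :=
  nth 0 (sort (fun x y : R => y <= x) [seq b j | j <- enum 'I_n]) m.-1.

(* The top k bids are confirmed; ties broken by index (smaller index first). *)
Definition above b (i : 'I_n) : {set 'I_n} :=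
  [set j : 'I_n | (b i < b j) || ((b j == b i) && (nat_of_ord j < nat_of_ord i)%N)].
Definition confirmed b (i : 'I_n) : bool := (#|above b i| < k)%N.

Definition vcg_pay b (i : 'I_n) : R := if confirmed b i then ostat b k.+1 else 0.

Definition rebate b (i : 'I_n) : R :=
  if confirmed b i then (k%:R / n%:R) * ostat b k.+1
  else (k%:R / n%:R) * ostat b k.

(* Rebate actually paid, given the outcome g of user i's coin (granted w.p. alpha). *)
Definition rebate_paid b (i : 'I_n) (g : bool) : R := if g then rebate b i else 0.

Definition pay b (i : 'I_n) (g : bool) : R := vcg_pay b i - rebate_paid b i g.

Definition expect alpha (f : bool -> R) : R := alpha * f true + (1 - alpha) * f false.

Definition exp_util alpha theta b (i : 'I_n) : R :=
  (if confirmed b i then theta i else 0) - expect alpha (pay b i).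

(* Expected redistribution fraction: expected rebate to the confirmed users
   divided by the VCG payment k * b_{k+1}. *)
Definition redistribution_fraction alpha b : R :=
  (\sum_(i | confirmed b i) expect alpha (rebate_paid b i)) / (k%:R * ostat b k.+1).

Definition alloc_efficient : Prop :=
  forall theta, (forall i, 0 <= theta i) ->
    #|[set i | confirmed theta i]| = k /\
    forall S : {set 'I_n}, (#|S| <= k)%N ->
      \sum_(i in S) theta i <= \sum_(i | confirmed theta i) theta i.

Definition upd b (i : 'I_n) (x : R) : 'I_n -> R :=
  fun j => if j == i then x else b j.

Definition restricted_UIC_exp alpha : Prop :=
  forall theta b (i : 'I_n) (x : R),
    (forall j, 0 <= theta j) -> (forall j, 0 <= b j) -> 0 <= x ->
    exp_util alpha theta (upd b i x) i <= exp_util alpha theta (upd b i (theta i)) i.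

Definition user_IR alpha : Prop :=
  forall theta, (forall j, 0 <= theta j) ->
    forall i, 0 <= exp_util alpha theta theta i.

Definition miner_IR_exp alpha b : Prop :=
  \sum_i expect alpha (rebate_paid b i) <= k%:R * ostat b k.+1.

End R2TFRM.

(* Main.v *)
Require Import Defs.
From HB Require Import structures.
From mathcomp Require Import all_boot all_order all_algebra.
From mathcomp Require Import ring lra zify.
Set Implicit Arguments. Unset Strict Implicit. Unset Printing Implicit Defensive.
Import Order.TTheory GRing.Theory Num.Theory.
Local Open Scope ring_scope.

Lemma count_enum_card (n : nat) (P : pred 'I_n) : count P (enum 'I_n) = #|[set i | P i]|.
Proof. rewrite cardsE cardE /enum_mem size_filter.
by rewrite (@eq_filter _ _ predT) // filter_predT. Qed.

Section Rank.
Variable R : realFieldType.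
Variable n : nat.
Implicit Types b : 'I_n -> R.

Lemma above_irr b i : i \notin above b i.
Proof. by rewrite inE ltxx eqxx ltnn. Qed.

Lemma above_le b i j : j \in above b i -> b i <= b j.
Proof. rewrite inE => /orP[/ltW//|/andP[/eqP-> _]//]. Qed.

Lemma above_trans b i j l : j \in above b i -> l \in above b j -> l \in above b i.
Proof.
rewrite !inE => /orP[H1|/andP[/eqP E1 H1]] /orP[H2|/andP[/eqP E2 H2]].
- by rewrite (lt_trans H1 H2).
- by rewrite E2 H1.
- by rewrite -E1 H2.
- by rewrite E2 E1 eqxx (ltn_trans H2 H1) orbT.
Qed.

Lemma above_total b i j : i != j -> (i \in above b j) || (j \in above b i).
Proof.
move=> nij; rewrite !inE; case: (ltgtP (b i) (b j)) => //= E.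
case: (ltngtP i j) => // /val_inj E'.
by rewrite E' eqxx in nij.
Qed.

Lemma rank_lt b i j : j \in above b i -> (#|above b j| < #|above b i|)%N.
Proof.
move=> H; apply: proper_card; apply/properP; split.
  by apply/subsetP => l; apply: above_trans.
by exists j => //; apply: above_irr.
Qed.

Lemma rank_inj b i j : #|above b i| = #|above b j| -> i = j.
Proof.
move=> E; apply/eqP; apply/negPn/negP => nij.
case/orP: (above_total b nij) => /rank_lt; rewrite E ltnn //.
Qed.

Lemma rank_small b i : (#|above b i| < n)%N.
Proof.
apply: (@leq_trans #|[set: 'I_n]|); last by rewrite cardsT card_ord.
apply: proper_card; apply/properP; split; first exact: subsetT.
by exists i; [exact: in_setT | exact: above_irr].
Qed.

Lemma rank_exists b m : (m < n)%N -> exists j, #|above b j| = m.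
Proof.
move=> Hm.
pose f := fun i => Ordinal (rank_small b i).
have finj : injective f.
  by move=> i j /(congr1 val) /= /rank_inj.
have := inj_card_onto finj (leqnn _) (Ordinal Hm).
by case/codomP => j /(congr1 val) /= ->; exists j.
Qed.

Lemma card_conf b k : (k <= n)%N -> #|[set i | confirmed k b i]| = k.
Proof.
move=> Hk.
pose f := fun i => Ordinal (rank_small b i).
have finj : injective f by move=> i j /(congr1 val) /= /rank_inj.
have -> : [set i | confirmed k b i] = f @^-1: [set m : 'I_n | (m < k)%N].
  by apply/setP => i; rewrite !inE.
rewrite card_preimset //.
have -> : [set m : 'I_n | (m < k)%N] = widen_ord Hk @: [set: 'I_k].
  apply/setP => m; rewrite inE; apply/idP/imsetP.
    by move=> Hmk; exists (Ordinal Hmk) => //; apply: val_inj.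
  by case=> x _ ->; rewrite /= ltn_ord.
by rewrite card_imset ?cardsT ?card_ord //; by move=> x y /(congr1 val) /= /val_inj.
Qed.

Lemma ostat_rank b j m : #|above b j| = m -> ostat b m.+1 = b j.
Proof.
move=> Hj.
have Hm : (m < n)%N by rewrite -Hj rank_small.
rewrite /ostat /=.
set s := sort _ _.
have Hs : sorted (fun x y : R => y <= x) s.
  by apply: sort_sorted => x y; apply: le_total.
have Hp : perm_eq s [seq b j | j <- enum 'I_n] by rewrite /s perm_sort perm_refl.
have Hsz : size s = n by rewrite size_sort size_map size_enum_ord.
set v := nth 0 s m.
have tr : transitive (fun x y : R => y <= x) by move=> x y z /= H1 H2; apply: le_trans H2 H1.
have rf : reflexive (fun x y : R => y <= x) by move=> x /=.
have hi : forall p, (p < size s)%N -> (p <= m)%N -> v <= nth 0 s p.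
  by move=> p Hp1 Hp2; apply: (sorted_leq_nth tr rf 0 Hs) => //; rewrite inE Hsz.
have lo : forall p, (p < size s)%N -> (m <= p)%N -> nth 0 s p <= v.
  by move=> p Hp1 Hp2; apply: (sorted_leq_nth tr rf 0 Hs) => //; rewrite inE Hsz.
have cnt : forall P : pred R, count P s = #|[set l | (P (b l))%R]|.
  move=> P; rewrite (permP Hp) count_map; exact: count_enum_card.
have c1 : (m.+1 <= #|[set l | (v <= b l)%R]|)%N.
  rewrite -(cnt (fun x => v <= x)) -(cat_take_drop m.+1 s) count_cat.
  have -> : count (fun x => v <= x) (take m.+1 s) = m.+1.
    have Hsz' : size (take m.+1 s) = m.+1 by rewrite size_takel // Hsz.
    rewrite -{2}Hsz'; apply/eqP; rewrite -all_count; apply/allP => x /(nthP 0) [p Hp1 <-].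
    rewrite Hsz' in Hp1; rewrite nth_take //; apply: hi => //.
      by rewrite Hsz (leq_trans Hp1).
  exact: leq_addr.
have c2 : (#|[set l | (v < b l)%R]| <= m)%N.
  rewrite -(cnt (fun x => v < x)) -(cat_take_drop m s) count_cat.
  have -> : count (fun x => v < x) (drop m s) = 0%N.
    apply/eqP; rewrite -leqn0 leqNgt -has_count; apply/hasPn => x /(nthP 0) [p Hp1 <-].
    rewrite size_drop in Hp1; rewrite nth_drop -leNgt; apply: lo => //.
      by rewrite -ltn_subRL. 
    exact: leq_addr.
  rewrite addn0; apply: leq_trans (count_size _ _) _.
  by rewrite size_takel // Hsz ltnW.
have s1 : (m.+1 <= #|[set l | (b j <= b l)%R]|)%N.
  rewrite -Hj; apply: leq_trans (_ : #|j |: above b j| <= _)%N.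
    by rewrite cardsU1 above_irr.
  apply: subset_leq_card; apply/subsetP => l; rewrite !inE => /orP[/eqP->//|H].
  by apply: above_le; rewrite inE.
have s2 : (#|[set l | (b j < b l)%R]| <= m)%N.
  rewrite -Hj; apply: subset_leq_card; apply/subsetP => l; rewrite !inE => ->//.
case: (ltgtP v (b j)) => // E.
- have : (#|[set l | (b j <= b l)%R]| <= #|[set l | (v < b l)%R]|)%N.
    by apply: subset_leq_card; apply/subsetP => l; rewrite !inE => H; apply: lt_le_trans H.
  by move=> H; have := leq_trans s1 (leq_trans H c2); rewrite ltnn.
- have : (#|[set l | (v <= b l)%R]| <= #|[set l | (b j < b l)%R]|)%N.
    by apply: subset_leq_card; apply/subsetP => l; rewrite !inE => H; apply: lt_le_trans H.
  by move=> H; have := leq_trans c1 (leq_trans H s2); rewrite ltnn.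
Qed.


Lemma sum_le_swap (T : finType) (f : T -> R) (A B : {set T}) :
  (forall x, 0 <= f x) -> (#|A| <= #|B|)%N ->
  (forall a c, a \in A -> c \in B -> f a <= f c) ->
  \sum_(i in A) f i <= \sum_(i in B) f i.
Proof.
move=> f0 hAB hle.
case: (set_0Vmem A) => [->|[a0 Ha0]].
  by rewrite big_set0; apply: sumr_ge0.
case: (arg_maxP f Ha0) => am Ham Hmax.
apply: (@le_trans _ _ (\sum_(i in A) f am)).
  by apply: ler_sum => i Hi; apply: Hmax.
rewrite sumr_const; apply: (@le_trans _ _ (\sum_(i in B) f am)).
  by rewrite sumr_const -[f am *+ #|A|]mulr_natr -[f am *+ #|B|]mulr_natr ler_wpM2l // ler_nat.
by apply: ler_sum => i Hi; apply: hle.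
Qed.

Variable k : nat.
Hypothesis Hk1 : (1 <= k)%N.
Hypothesis Hkn : (k < n)%N.

Definition V b i := if confirmed k b i then ostat b k.+1 else ostat b k.

Lemma conf_V_le b i : confirmed k b i -> V b i <= b i.
Proof.
rewrite /V /confirmed => Hc; rewrite Hc.
have [j Hj] := rank_exists b Hkn.
rewrite (ostat_rank Hj).
have nij : i != j by apply/eqP => E; rewrite E Hj ltnn in Hc.
case/orP: (above_total b nij) => H; first exact: above_le.
by have := rank_lt H; rewrite Hj ltnNge (ltnW Hc).
Qed.

Lemma nconf_V_ge b i : ~~ confirmed k b i -> b i <= V b i.
Proof.
rewrite /V /confirmed => Hc; rewrite (negbTE Hc).
have Hk' : (k.-1 < n)%N by rewrite (leq_ltn_trans (leq_pred k) Hkn).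
have [j Hj] := rank_exists b Hk'.
rewrite -(prednK Hk1) (ostat_rank Hj).
have nij : i != j.
  by apply/eqP => E; move: Hc; rewrite E Hj; lia.
case/orP: (above_total b nij) => H.
  by have := rank_lt H; rewrite Hj; move: Hc; rewrite -leqNgt; lia.
exact: above_le.
Qed.

Lemma V_exists b i : exists j, [/\ j != i, #|above b j :\ i| = k.-1 & V b i = b j].
Proof.
rewrite /V /confirmed; case: ifP => Hc.
  have [j Hj] := rank_exists b Hkn.
  have nij : i != j by apply/eqP => E; rewrite E Hj ltnn in Hc.
  exists j; split; first by rewrite eq_sym.
    have Hi : i \in above b j.
      case/orP: (above_total b nij) => // H.
      by have := rank_lt H; rewrite Hj ltnNge (ltnW Hc).
    by move: Hj; rewrite (cardsD1 i) Hi add1n => <-.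
  exact: ostat_rank.
have Hk' : (k.-1 < n)%N by rewrite (leq_ltn_trans (leq_pred k) Hkn).
have [j Hj] := rank_exists b Hk'.
have nij : i != j.
  by apply/eqP => E; move: Hc; rewrite E Hj; lia.
exists j; split; first by rewrite eq_sym.
  have Hi : i \notin above b j.
    apply/negP => H; have := rank_lt H; rewrite Hj; move/negbT: Hc; rewrite -leqNgt; lia.
  by move: Hj; rewrite (cardsD1 i) (negbTE Hi) add0n.
by rewrite -(prednK Hk1) (ostat_rank Hj).
Qed.

Lemma ro_inj b i j1 j2 : j1 != i -> j2 != i ->
  #|above b j1 :\ i| = #|above b j2 :\ i| -> j1 = j2.
Proof.
move=> h1 h2 E; apply/eqP; apply/negPn/negP => n12.
have key : forall x y, x != i -> x \in above b y -> (#|above b x :\ i| < #|above b y :\ i|)%N.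
  move=> x y hx H; apply: proper_card; apply/properP; split.
    by apply: setSD; apply/subsetP => l; apply: above_trans.
  by exists x; [rewrite in_setD1 hx | rewrite in_setD1 negb_and (above_irr b x) orbT].
case/orP: (above_total b n12) => H.
  by have := key _ _ h1 H; rewrite E ltnn.
by have := key _ _ h2 H; rewrite E ltnn.
Qed.

Lemma V_agree b1 b2 i : (forall l, l != i -> b1 l = b2 l) -> V b1 i = V b2 i.
Proof.
move=> Hag.
have [j1 [h1 E1 ->]] := V_exists b1 i.
have [j2 [h2 E2 ->]] := V_exists b2 i.
have S : above b1 j1 :\ i = above b2 j1 :\ i.
  apply/setP => l; rewrite !inE; case: (eqVneq l i) => //= hl.
  by rewrite (Hag _ hl) (Hag _ h1).
have E : j1 = j2 by apply: (@ro_inj b2 i j1 j2 h1 h2); rewrite -S E1 E2.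
by rewrite -E Hag.
Qed.

Lemma exp_util_eq alpha theta b i :
  exp_util k alpha theta b i =
  (if confirmed k b i then theta i - V b i else 0) + alpha * (k%:R / n%:R) * V b i.
Proof.
rewrite /exp_util /expect /pay /vcg_pay /rebate_paid /rebate /V.
by case: confirmed; rewrite ?subr0 ?mulr0 ?addr0; ring.
Qed.

End Rank.

Theorem theorem6 (R : realFieldType) (n k : nat) (alpha : R) :
  (1 <= k)%N -> (k <= n - 2)%N -> 0 < alpha < 1 ->
  (forall b : 'I_n -> R, (forall i, 0 <= b i) -> 0 < ostat b k.+1 ->
     redistribution_fraction k alpha b = alpha * (k%:R / n%:R))
  /\ alloc_efficient R n k
  /\ restricted_UIC_exp n k alpha
  /\ user_IR n k alpha
  /\ (forall b : 'I_n -> R, (forall i, 0 <= b i) -> 0 < ostat b k.+1 ->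
        alpha <= n%:R / (k%:R + (n - k)%:R * (ostat b k / ostat b k.+1)) ->
        miner_IR_exp k alpha b).
Proof.
move=> Hk1 Hk2 /andP[Ha0 Ha1].
have Hkn : (k < n)%N by lia.
have Hkn' : (k <= n)%N by lia.
have kr0 : (0 : R) < k%:R by rewrite ltr0n.
have nr0 : (0 : R) < n%:R by rewrite ltr0n; lia.
have Vge0 : forall (b : 'I_n -> R) (i : 'I_n), (forall l, 0 <= b l) -> 0 <= V k b i.
  by move=> b i H; have [j [_ _ ->]] := V_exists Hk1 Hkn b i.
split.
  move=> b Hb Hc1.
  rewrite /redistribution_fraction.
  rewrite (eq_bigr (fun _ => alpha * (k%:R / n%:R * ostat b k.+1))); last first.
    by move=> i Hi; rewrite /expect /rebate_paid /rebate Hi mulr0 addr0.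
  rewrite (eq_bigl (fun i => i \in [set i | confirmed k b i])); last first.
    by move=> i; rewrite inE.
  rewrite sumr_const card_conf // -mulr_natr.
  field.
  by rewrite (gt_eqF nr0) (gt_eqF Hc1) (gt_eqF kr0).
split.
  move=> theta Ht; split; first exact: card_conf.
  move=> S HS.
  set C := [set i | confirmed k theta i].
  rewrite [X in _ <= X](eq_bigl (fun i => i \in C)); last by move=> i; rewrite inE.
  rewrite (big_setID C) [X in _ <= X](big_setID S) setIC lerD2l.
  apply: sum_le_swap => //.
    have h1 := cardsID C S; have h2 := cardsID S C.
    rewrite setIC in h2; have := card_conf theta Hkn'; rewrite -/C.
    by move=> hC; rewrite -(leq_add2l #|S :&: C|) h1 h2 hC.
  move=> a c; rewrite !in_setD !inE => /andP[Ha _] /andP[_ Hc].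
  have nac : a != c by apply/eqP => E; rewrite E Hc in Ha.
  case/orP: (above_total theta nac) => H; last exact: above_le.
  have := rank_lt H; move: Ha Hc; rewrite /confirmed; lia.
split.
  move=> theta b i x _ _ _.
  rewrite !exp_util_eq.
  rewrite (@V_agree R n k Hk1 Hkn (upd b i x) (upd b i (theta i)) i); last first.
    by move=> l hl; rewrite /upd (negbTE hl).
  rewrite lerD2r.
  have Hti : upd b i (theta i) i = theta i by rewrite /upd eqxx.
  case: (boolP (confirmed k (upd b i (theta i)) i)) => Hc.
    have := conf_V_le Hkn Hc; rewrite Hti => H.
    by case: confirmed => //; rewrite subr_ge0.
  have := nconf_V_ge Hk1 Hkn Hc; rewrite Hti => H.
  by case: confirmed => //; rewrite subr_le0.
split.
  move=> theta Ht i; rewrite exp_util_eq; apply: addr_ge0.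
    case: (boolP (confirmed k theta i)) => Hc //.
    by rewrite subr_ge0; apply: conf_V_le.
  apply: mulr_ge0; last exact: Vge0.
  by apply: mulr_ge0; [exact: ltW | apply: divr_ge0; apply: ltW].
move=> b Hb Hc1 Halpha.
rewrite /miner_IR_exp.
set c1 := ostat b k.+1; set c0 := ostat b k.
have c0ge : 0 <= c0.
  have Hk' : (k.-1 < n)%N by lia.
  have [j Hj] := rank_exists b Hk'.
  by rewrite /c0 -(prednK Hk1) (ostat_rank Hj).
rewrite (eq_bigr (fun i => alpha * (k%:R / n%:R) * V k b i)); last first.
  by move=> i _; rewrite /expect /rebate_paid /rebate /V; case: confirmed; rewrite mulr0 addr0 mulrA.
rewrite -mulr_sumr (bigID (fun i => confirmed k b i)) /=.
rewrite (eq_bigr (fun _ => c1)); last by move=> i Hi; rewrite /V Hi.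
rewrite [X in _ + X](eq_bigr (fun _ => c0)); last by move=> i Hi; rewrite /V (negbTE Hi).
set C := [set i | confirmed k b i].
rewrite (eq_bigl (fun i => i \in C)); last by move=> i; rewrite inE.
rewrite [X in _ + X](eq_bigl (fun i => i \in ~: C)); last by move=> i; rewrite !inE.
rewrite !sumr_const.
have hC : #|C| = k by apply: card_conf.
have hCc : #|~: C| = (n - k)%N.
  by have := cardsC C; rewrite hC card_ord; lia.
rewrite hC hCc -[c1 *+ k]mulr_natr -[c0 *+ (n - k)]mulr_natr.
set D := k%:R + (n - k)%:R * (c0 / c1).
have D0 : 0 < D.
  apply: (@lt_le_trans _ _ k%:R) => //; rewrite lerDl; apply: mulr_ge0 => //.
  by apply: divr_ge0 => //; apply: ltW.
rewrite ler_pdivlMr // in Halpha.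
have E : alpha * (k%:R / n%:R) * (c1 * k%:R + c0 * (n - k)%:R) = (k%:R * c1 / n%:R) * (alpha * D).
  rewrite /D; field; by rewrite !gt_eqF.
rewrite E; apply: (@le_trans _ _ ((k%:R * c1 / n%:R) * n%:R)).
  apply: ler_wpM2l => //; apply: mulr_ge0; last by rewrite invr_ge0 ltW.
  by apply: mulr_ge0; apply: ltW.
rewrite divfK ?gt_eqF //.
Qed.
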